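(* Let $d\ge2$, $l>0$, $\lambda\ne0$, and constants $a,b\in\mathbb R$, $b>0$, $z_0\in\mathbb R^d$. On $\mathbb H_{d+1}$ with metric $ds^2=\frac{l^2}{z^2}(dz^2+dz^idz^i)$, $z>0$, define on the set where the right-hand side is positive $$\phi^{2/(d-1)}=\frac{d-1}{l\sqrt{|\lambda|}}\,\frac{bz}{-\mathrm{sgn}(\lambda)b^2+(z+a)^2+|\vec z-\vec z_0|^2}.$$ Then $\mathcal T_{\mu\nu}=0$, $R_{\mu\nu}+\frac d{l^2}g_{\mu\nu}=0$ and $\square_g\phi-\frac{d-1}{4d}R\phi-\frac{d+1}{d-1}\lambda\phi^{\frac{d+3}{d-1}}=0$, so $(g,\phi)$ solves the equations of motion of the conformally coupled scalar. Moreover, with $z=e^{-r/l}$, as $r\to\infty$, $$\phi=e^{-\frac{(d-1)r}{2l}}\phi_-(\vec z)-l\alpha\,e^{-\frac{(d+1)r}{2l}}\phi_-(\vec z)^{\frac{d+1}{d-1}}+\dots,\qquad \alpha=\frac{\sqrt{|\lambda|}\,a}{b},\qquad \phi_-^{2/(d-1)}=\frac{d-1}{l\sqrt{|\lambda|}}\frac{b}{-\mathrm{sgn}(\lambda)b^2+a^2+|\vec z-\vec z_0|^2},$$ so that $\hat\pi_{(\Delta_+)}:=-\frac1l\phi_+=\alpha\phi_-^{\frac{d+1}{d-1}}$ and the solution satisfies the mixed boundary condition $-\hat\pi_{(\Delta_+)}-f'(\phi_-)=0$ with $f(\phi_-)=-\alpha\frac{d-1}{2d}\phi_-^{\frac{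2d}{d-1}}$.
   Context: $\mathcal T_{\mu\nu}=\frac{(d-1)^2}{4d}\frac{\phi^{2d/(d-1)}}{1-\frac{(d-1)\kappa^2}{4d}\phi^2}\big(\nabla_\mu\nabla_\nu-\frac1{d+1}g_{\mu\nu}\square_g\big)\phi^{-2/(d-1)}$. The equations of motion of the conformally coupled scalar (action $\int\sqrt g(-\frac{1}{2\kappa^2}(R+\frac{d(d-1)}{l^2})+\frac12(\partial\phi)^2+\frac{d-1}{8d}R\phi^2+\frac\lambda2\phi^{2(d+1)/(d-1)})$) are $R_{\mu\nu}+\frac d{l^2}g_{\mu\nu}=\kappa^2\mathcal T_{\mu\nu}$ and $\square_g\phi-\frac{d-1}{4d}R\phi-\frac{d+1}{d-1}\lambda\phi^{(d+3)/(d-1)}=0$. $\phi_+$ denotes the coefficient of $e^{-(d+1)r/2l}$ in the expansion. *)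

(* Defs.v *)
From HB Require Import structures.
From mathcomp Require Import all_boot all_order all_algebra.
From mathcomp Require Import all_classical all_reals all_analysis.
Unset Printing Implicit Defensive.
Import Order.TTheory GRing.Theory Num.Theory.
Import numFieldNormedType.Exports.
Local Open Scope ring_scope.
Local Open Scope classical_set_scope.

(* Coordinates on an n-dimensional chart are row vectors x : 'rV[R]_n;
   coordinate mu is x ord0 mu.  A metric is given by its component matrix
   g x : 'M_n at each point. *)

Definition pd {R : realType} {n : nat} (f : 'rV[R]_n -> R) (i : 'I_n)
  (x : 'rV[R]_n) : R := 'D_(delta_mx 0 i) f x.

Definition ginv {R : realType} {n : nat} (g : 'rV[R]_n -> 'M[R]_n)
  (x : 'rV[R]_n) : 'M[R]_n := invmx (g x).

Definition christoffel {R : realType} {n : nat} (g : 'rV[R]_n -> 'M[R]_n)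
  (k i j : 'I_n) (x : 'rV[R]_n) : R :=
  2^-1 * \sum_(m < n) ginv g x k m *
    (pd (fun y => g y m j) i x + pd (fun y => g y m i) j x
     - pd (fun y => g y i j) m x).

Definition ricci {R : realType} {n : nat} (g : 'rV[R]_n -> 'M[R]_n)
  (i j : 'I_n) (x : 'rV[R]_n) : R :=
  \sum_(k < n) (pd (christoffel g k i j) k x - pd (christoffel g k i k) j x
    + \sum_(m < n) (christoffel g k k m x * christoffel g m i j x
                    - christoffel g k j m x * christoffel g m i k x)).

Definition scalar_curv {R : realType} {n : nat} (g : 'rV[R]_n -> 'M[R]_n)
  (x : 'rV[R]_n) : R :=
  \sum_(i < n) \sum_(j < n) ginv g x i j * ricci g i j x.

Definition hess {R : realType} {n : nat} (g : 'rV[R]_n -> 'M[R]_n)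
  (f : 'rV[R]_n -> R) (i j : 'I_n) (x : 'rV[R]_n) : R :=
  pd (pd f j) i x - \sum_(k < n) christoffel g k i j x * pd f k x.

Definition box {R : realType} {n : nat} (g : 'rV[R]_n -> 'M[R]_n)
  (f : 'rV[R]_n -> R) (x : 'rV[R]_n) : R :=
  \sum_(i < n) \sum_(j < n) ginv g x i j * hess g f i j x.

Definition stressT {R : realType} (d : nat) (kappa : R)
  (g : 'rV[R]_d.+1 -> 'M[R]_d.+1) (phi : 'rV[R]_d.+1 -> R)
  (mu nu : 'I_d.+1) (x : 'rV[R]_d.+1) : R :=
  let dd := (d%:R : R) in
  let psi := fun y => phi y `^ (- (2 / (dd - 1))) in
  (dd - 1) ^+ 2 / (4 * dd) * phi x `^ (2 * dd / (dd - 1))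
    / (1 - (dd - 1) * kappa ^+ 2 / (4 * dd) * phi x ^+ 2)
  * (hess g psi mu nu x - (dd + 1)^-1 * g x mu nu * box g psi x).

(* Poincare coordinates on H_{d+1}: x ord0 ord0 = z, x ord0 (lift ord0 i) = z^i *)
Definition zc {R : realType} {d : nat} (x : 'rV[R]_d.+1) : R := x ord0 ord0.
Definition zvec {R : realType} {d : nat} (x : 'rV[R]_d.+1) : 'rV[R]_d :=
  \row_(i < d) x ord0 (lift ord0 i).
Definition pt {R : realType} {d : nat} (z : R) (zv : 'rV[R]_d) : 'rV[R]_d.+1 :=
  \row_(i < d.+1) (if unlift ord0 i is Some j then zv ord0 j else z).

Definition dist2 {R : realType} {d : nat} (v w : 'rV[R]_d) : R :=
  \sum_(i < d) (v ord0 i - w ord0 i) ^+ 2.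

Definition hypmetric {R : realType} {d : nat} (l : R) (x : 'rV[R]_d.+1)
  : 'M[R]_d.+1 := (l ^+ 2 / zc x ^+ 2)%:M.

Definition Fsol {R : realType} (d : nat) (l lambda a b : R) (z0 : 'rV[R]_d)
  (x : 'rV[R]_d.+1) : R :=
  (d%:R - 1) / (l * Num.sqrt `|lambda|) *
  (b * zc x / (- Num.sg lambda * b ^+ 2 + (zc x + a) ^+ 2 + dist2 (zvec x) z0)).

Definition phisol {R : realType} (d : nat) (l lambda a b : R) (z0 : 'rV[R]_d)
  (x : 'rV[R]_d.+1) : R :=
  Fsol d l lambda a b z0 x `^ ((d%:R - 1) / 2).

Definition phiminus {R : realType} (d : nat) (l lambda a b : R) (z0 zv : 'rV[R]_d)
  : R :=
  ((d%:R - 1) / (l * Num.sqrt `|lambda|) *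
   (b / (- Num.sg lambda * b ^+ 2 + a ^+ 2 + dist2 zv z0))) `^ ((d%:R - 1) / 2).

Definition alphac {R : realType} (lambda a b : R) : R :=
  Num.sqrt `|lambda| * a / b.

Definition fpot {R : realType} (d : nat) (alpha : R) (p : R) : R :=
  - alpha * ((d%:R - 1) / (2 * d%:R)) * p `^ (2 * d%:R / (d%:R - 1)).

Definition expansion {R : realType} (d : nat) (l : R) (phi : 'rV[R]_d.+1 -> R)
  (zv : 'rV[R]_d) (phim c : R) : Prop :=
  (fun r : R =>
     (phi (pt (expR (- r / l)) zv)
      - expR (- ((d%:R - 1) * r / (2 * l))) * phim
      - c * expR (- ((d%:R + 1) * r / (2 * l))))
     / expR (- ((d%:R + 1) * r / (2 * l))))
  @ +oo --> (0 : R).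

(* Main.v *)
Require Import Defs.
From HB Require Import structures.
From mathcomp Require Import all_boot all_order all_algebra.
From mathcomp Require Import all_classical all_reals all_analysis.
From mathcomp Require Import ring lra.
Import Order.TTheory GRing.Theory Num.Theory.
Import numFieldNormedType.Exports.
Local Open Scope ring_scope.
Local Open Scope classical_set_scope.


Section Helpers.
Context {R : realType} {V : normedModType R}.

Lemma derive_line (f : V -> R) x v :
  'D_v f x = 'D_1 (fun h : R => f (h *: v + x)) 0.
Proof.
rewrite /derive. f_equal; f_equal.
apply/funext => h /=; rewrite /shift /= !scale0r !add0r !addr0.
by rewrite [h *: (1:R)]mulr1.
Qed.

Lemma is_derive_line (f : V -> R) x v dg :
  is_derive (0:R) 1 (fun h : R => f (h *: v + x)) dg -> is_derive x v f dg.
Proof.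
move=> [H1 H2]; apply: DeriveDef; first by apply/derivable1P.
by rewrite derive_line.
Qed.

Lemma is_derive_line_inv (f : V -> R) x v dg :
  is_derive x v f dg -> is_derive (0:R) 1 (fun h : R => f (h *: v + x)) dg.
Proof.
move=> [H1 H2]; apply: DeriveDef; first exact: (derivable1P f x v).1 H1.
by rewrite -derive_line.
Qed.

Lemma isd_powR (G : V -> R) x v dG r :
  is_derive x v G dG -> 0 < G x ->
  is_derive x v (fun y => G y `^ r) (r * G x `^ (r - 1) * dG).
Proof.
move=> /is_derive_line_inv hG Gx; apply: is_derive_line.
set g := (fun h : R => G (h *: v + x)) in hG *.
have g0 : g 0 = G x by rewrite /g scale0r add0r.
have dg : derivable g 0 1 by case: hG.
have hp : is_derive (g 0) 1 (@powR R ^~ r) (r * g 0 `^ (r - 1)) by apply: (@is_derive1_powR R r (g 0)); rewrite g0.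
have dp : derivable (@powR R ^~ r) (g 0) 1 by case: hp.
have e : (fun h => G (h *: v + x) `^ r) = (@powR R ^~ r) \o g by [].
rewrite e; apply: DeriveDef.
  apply/derivable1_diffP; apply: differentiable_comp; apply/derivable1_diffP => //.
rewrite -derive1E derive1_comp // !derive1E.
have [_ ->] := hp; have [_ ->] := hG.
by rewrite g0.
Qed.


Lemma isdC (c : R) (x v : V) : is_derive x v (fun _ : V => c) 0.
Proof. exact: (is_derive_cst c). Qed.

Lemma isdD (f g : V -> R) x v df dg :
  is_derive x v f df -> is_derive x v g dg ->
  is_derive x v (fun y => f y + g y) (df + dg).
Proof. by move=> hf hg; have := is_deriveD hf hg. Qed.

Lemma isdN (f : V -> R) x v df :
  is_derive x v f df -> is_derive x v (fun y => - f y) (- df).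
Proof. by move=> hf; have := is_deriveN hf. Qed.

Lemma isdB (f g : V -> R) x v df dg :
  is_derive x v f df -> is_derive x v g dg ->
  is_derive x v (fun y => f y - g y) (df - dg).
Proof. by move=> hf hg; have := is_deriveB hf hg. Qed.

Lemma isdM (f g : V -> R) x v df dg :
  is_derive x v f df -> is_derive x v g dg ->
  is_derive x v (fun y => f y * g y) (f x * dg + g x * df).
Proof. by move=> hf hg; have := is_deriveM hf hg. Qed.

Lemma isdV (f : V -> R) x v df :
  is_derive x v f df -> f x != 0 ->
  is_derive x v (fun y => (f y)^-1) (- (f x) ^- 2 * df).
Proof.
move=> [hd hv] fx; apply: DeriveDef; first exact: derivableV.
by rewrite deriveV // hv.
Qed.

Lemma isd_sum m (h : 'I_m -> V -> R) x v (dh : 'I_m -> R) :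
  (forall i, is_derive x v (h i) (dh i)) ->
  is_derive x v (fun y => \sum_(i < m) h i y) (\sum_(i < m) dh i).
Proof. by move=> H; have := is_derive_sum H; rewrite fct_sumE. Qed.

Lemma isd_ext (f g : V -> R) x v df :
  (forall y, f y = g y) -> is_derive x v f df -> is_derive x v g df.
Proof. by move=> e; have -> : f = g by apply/funext. Qed.

Lemma isd_eq (f : V -> R) x v df df' :
  is_derive x v f df -> df = df' -> is_derive x v f df'.
Proof. by move=> h <-. Qed.

Lemma isdId (x v : V) : is_derive x v (fun y => y) v.
Proof. exact: is_derive_id. Qed.

End Helpers.

Section Coord.
Context {R : realType} {n : nat}.
Notation V := 'rV[R]_n.
Lemma isd_coord (x v : V) (k : 'I_n) :
  is_derive x v (fun y : V => y ord0 k) (v ord0 k).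
Proof.
apply: is_derive_line.
have -> : (fun h : R => (h *: v + x) ord0 k) = (fun h => h * v ord0 k + x ord0 k).
  by apply/funext => h; rewrite !mxE.
apply: is_derive_eq.
by rewrite scaler0 add0r addr0 [_%:A]mulr1.
Qed.

End Coord.


Arguments isdD {R V f g x v df dg}.
Arguments isdN {R V f x v df}.
Arguments isdB {R V f g x v df dg}.
Arguments isdM {R V f g x v df dg}.
Arguments isdV {R V f x v df}.
Arguments isd_powR {R V G x v dG} r.
Arguments isd_ext {R V f g x v df}.
Arguments isd_eq {R V f x v df df'}.


Section Model.
Variable R : realType.
Variable d : nat.
Variables (l lam a b : R) (z0 : 'rV[R]_d).
Hypothesis hl0 : l != 0.
Notation n := d.+1.
Notation V := 'rV[R]_n.

Definition dl (i j : 'I_n) : R := (i == j)%:R.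
Definition ee (i : 'I_n) : V := delta_mx 0 i.

Lemma ee_coord i k : ee i ord0 k = dl k i.
Proof. by rewrite /ee /dl mxE eqxx. Qed.

Lemma dlC i j : dl i j = dl j i.
Proof. by rewrite /dl eq_sym. Qed.

Lemma sum_dl (F : 'I_n -> R) i : \sum_(k < n) F k * dl k i = F i.
Proof.
rewrite (bigD1 i) //= /dl eqxx mulr1 big1 ?addr0 // => k /negbTE ->.
by rewrite mulr0.
Qed.

Lemma sum_dl' (F : 'I_n -> R) i : \sum_(k < n) dl i k * F k = F i.
Proof. by rewrite -[RHS](sum_dl F i); apply: eq_bigr => k _; rewrite mulrC dlC. Qed.

Definition sft (i : 'I_n) : R := if unlift ord0 i is Some j then z0 ord0 j else - a.
Definition Kc : R := - Num.sg lam * b ^+ 2.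
Definition Qv (y : V) : R := Kc + \sum_(i < n) (y ord0 i - sft i) ^+ 2.

Lemma Qv_eq y : Kc + (zc y + a) ^+ 2 + dist2 (zvec y) z0 = Qv y.
Proof.
rewrite /Qv big_ord_recl /sft unlift_none /zc /dist2 opprK addrA; congr (_ + _).
by apply: eq_bigr => j _; rewrite liftK /zvec mxE.
Qed.

Lemma isd_coord' (y v : V) k : is_derive y v (fun y : V => y ord0 k) (v ord0 k).
Proof. exact: isd_coord. Qed.

Lemma isdQ (y v : V) :
  is_derive y v Qv (\sum_(i < n) 2 * (y ord0 i - sft i) * v ord0 i).
Proof.
rewrite /Qv; apply: isd_eq. apply: isdD. apply: isd_sum => i.
  apply: (@isd_ext _ _ (fun y : V => (y ord0 i - sft i) * (y ord0 i - sft i))).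
    by move=> w; rewrite expr2.
  by apply: isdM; apply: isdB; try apply: isd_coord; try apply: isdC.
rewrite add0r; apply: eq_bigr => i _; rewrite subr0; ring.
Qed.

Definition U (y : V) : R := Qv y * (zc y)^-1.

Definition DU (y : V) (j : 'I_n) : R :=
  2 * (y ord0 j - sft j) * (zc y)^-1 - dl j ord0 * (Qv y * ((zc y)^-1 * (zc y)^-1)).

Lemma isdU (y : V) j : zc y != 0 -> is_derive y (ee j) U (DU y j).
Proof.
move=> hz; apply: isd_eq; first apply: isdM; [apply: isdQ| apply: isdV => //; apply: isd_coord|].
rewrite /DU (eq_bigr (fun k => 2 * (y ord0 k - sft k) * dl k j)); last first.
  by move=> k _; rewrite ee_coord.
rewrite (sum_dl (fun k => 2 * (y ord0 k - sft k))) ee_coord /zc.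
rewrite expr2 invfM (dlC ord0 j); ring.
Qed.


Definition D2U (y : V) (i j : 'I_n) : R :=
  let iz := (zc y)^-1 in
  2 * dl j i * iz - 2 * (y ord0 j - sft j) * (iz * iz) * dl i ord0
  - dl j ord0 * (2 * (y ord0 i - sft i) * (iz * iz) - 2 * Qv y * (iz * iz * iz) * dl i ord0).

Lemma isdDU (y : V) i j : zc y != 0 ->
  is_derive y (ee i) (fun w => DU w j) (D2U y i j).
Proof.
move=> hz; rewrite /DU; apply: isd_eq.
  apply: isdB; apply: isdM; try apply: isdM; try apply: isdB; try apply: isdQ;
    try apply: isd_coord; try apply: isdC; try apply: isdM;
    try (apply: isdV => //; apply: isd_coord).
rewrite /D2U (eq_bigr (fun k => 2 * (y ord0 k - sft k) * dl k i)); last first.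
  by move=> k _; rewrite ee_coord.
rewrite (sum_dl (fun k => 2 * (y ord0 k - sft k))) !ee_coord /zc.
rewrite expr2 invfM (dlC ord0 i); ring.
Qed.


Notation g := (@hypmetric R d l).

Lemma g_entry y m j : g y m j = l ^+ 2 * ((zc y)^-1 * (zc y)^-1) * dl m j.
Proof. by rewrite /hypmetric mxE /dl mulr_natr expr2 invfM. Qed.

Lemma ginv_entry y m j : ginv g y m j = zc y * zc y / l ^+ 2 * dl m j.
Proof.
by rewrite /ginv /hypmetric invmx_scalar mxE /dl mulr_natr invf_div expr2.
Qed.

Lemma isdg m j i y : zc y != 0 ->
  is_derive y (ee i) (fun w => g w m j)
    (-2 * l ^+ 2 * ((zc y)^-1 * (zc y)^-1 * (zc y)^-1) * dl m j * dl i ord0).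
Proof.
move=> hz; apply: (@isd_ext _ _ (fun w => l ^+ 2 * ((zc w)^-1 * (zc w)^-1) * dl m j)).
  by move=> w; rewrite g_entry.
apply: isd_eq.
  apply: isdM; try apply: isdM; try apply: isdC; try apply: isdM;
    try (apply: isdV => //; apply: isd_coord).
rewrite !ee_coord (dlC ord0 i) /zc expr2 invfM; ring.
Qed.

Lemma pdg m j i y : zc y != 0 -> pd (fun w => g w m j) i y =
  -2 * l ^+ 2 * ((zc y)^-1 * (zc y)^-1 * (zc y)^-1) * dl m j * dl i ord0.
Proof. by move=> hz; have [_ h] := isdg m j i y hz; exact: h. Qed.

Definition cc (k i j : 'I_n) : R :=
  dl k j * dl i ord0 + dl k i * dl j ord0 - dl i j * dl k ord0.

Lemma chris_eq k i j y : christoffel g k i j y = - (zc y)^-1 * cc k i j.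
Proof.
have [hz|hz] := eqVneq (zc y) 0.
  rewrite /christoffel big1 ?mulr0 ?hz ?invr0 ?oppr0 ?mul0r // => m _.
  by rewrite ginv_entry hz !mul0r.
rewrite /christoffel.
under eq_bigr => m _ do rewrite ginv_entry !pdg //.
rewrite (eq_bigr (fun m => dl k m * (zc y * zc y / l ^+ 2 *
   (-2 * l ^+ 2 * ((zc y)^-1 * (zc y)^-1 * (zc y)^-1) * dl m j * dl i ord0 +
    -2 * l ^+ 2 * ((zc y)^-1 * (zc y)^-1 * (zc y)^-1) * dl m i * dl j ord0 -
    -2 * l ^+ 2 * ((zc y)^-1 * (zc y)^-1 * (zc y)^-1) * dl i j * dl m ord0)))); last first.
  by move=> m _; ring.
rewrite sum_dl' /cc.
by field; rewrite hz hl0.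
Qed.


Lemma sum_cc (D : 'I_n -> R) i j :
  \sum_(k < n) cc k i j * D k = dl i ord0 * D j + dl j ord0 * D i - dl i j * D ord0.
Proof.
rewrite (eq_bigr (fun k => dl i ord0 * (D k * dl k j) + dl j ord0 * (D k * dl k i)
   + (- dl i j) * (D k * dl k ord0))); last by move=> k _; rewrite /cc; ring.
rewrite !big_split /= -!mulr_sumr !sum_dl; ring.
Qed.

Lemma dl_refl i : dl i i = 1.
Proof. by rewrite /dl eqxx. Qed.

Lemma cc_kkm k m : cc k k m = dl m ord0.
Proof. rewrite /cc dl_refl; ring. Qed.

Lemma cc_kjk k j : cc k j k = dl j ord0.
Proof. rewrite /cc dl_refl (dlC j k); ring. Qed.

Lemma pdchris k i j m x : zc x != 0 ->
  pd (christoffel g k i j) m x = (zc x)^-1 * (zc x)^-1 * dl m ord0 * cc k i j.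
Proof.
move=> hz.
have -> : christoffel g k i j = (fun y => - (zc y)^-1 * cc k i j).
  by apply/funext => y; rewrite chris_eq.
have h : is_derive x (ee m) (fun y => - (zc y)^-1 * cc k i j)
   ((zc x)^-1 * (zc x)^-1 * dl m ord0 * cc k i j).
  apply: isd_eq.
    apply: isdM; try apply: isdC; apply: isdN; apply: isdV => //; apply: isd_coord.
  by rewrite ee_coord /zc (dlC ord0 m) expr2 invfM; ring.
by case: h.
Qed.

Lemma sum_const_n (c : R) : \sum_(k < n) c = n%:R * c.
Proof. by rewrite sumr_const card_ord mulr_natl. Qed.

Lemma ricci_eq i j x : zc x != 0 ->
  ricci g i j x = - d%:R * ((zc x)^-1 * (zc x)^-1) * dl i j.
Proof.
move=> hz; rewrite /ricci.
set iz2 := (zc x)^-1 * (zc x)^-1.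
rewrite (eq_bigr (fun k => iz2 * (dl k ord0 * cc k i j) - iz2 * (dl i ord0 * dl j ord0)
   + iz2 * cc ord0 i j - iz2 * (dl i ord0 * dl j ord0 + dl k ord0 * cc k j i
     - dl i k * cc k j ord0))); last first.
  move=> k _; rewrite !pdchris // cc_kjk.
  under eq_bigr => m _ do rewrite !chris_eq.
  rewrite sumrB.
  rewrite (eq_bigr (fun m => iz2 * (cc m i j * dl m ord0))); last first.
    by move=> m _; rewrite cc_kkm; rewrite /iz2; ring.
  rewrite -mulr_sumr sum_dl.
  rewrite (eq_bigr (fun m => iz2 * (cc m i k * cc k j m))); last first.
    by move=> m _; rewrite /iz2; ring.
  rewrite -mulr_sumr sum_cc cc_kjk /iz2 (dlC k ord0); ring.
rewrite (eq_bigr (fun k => iz2 * (cc k i j * dl k ord0) + (- iz2) * (cc k j i * dl k ord0)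
   + iz2 * (dl i k * cc k j ord0) + iz2 * (cc ord0 i j - 2 * (dl i ord0 * dl j ord0))));
  last by move=> k _; ring.
rewrite !big_split /= -!mulr_sumr !sum_dl sum_const_n.
rewrite sum_dl'.
rewrite /cc !dl_refl.
have [->|hi] := eqVneq i ord0; have [->|hj] := eqVneq j ord0;
  rewrite /dl ?eqxx ?(negbTE hi) ?(negbTE hj) ?(eq_sym ord0) ?(negbTE hi) ?(negbTE hj) /=;
  rewrite -[n%:R]natr1 ?(eq_sym j i); ring.
Qed.


Lemma sum_ginv (M : 'I_n -> 'I_n -> R) y :
  \sum_(i < n) \sum_(j < n) ginv g y i j * M i j
  = zc y * zc y / l ^+ 2 * \sum_(i < n) M i i.
Proof.
rewrite mulr_sumr; apply: eq_bigr => i _.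
rewrite (eq_bigr (fun j => (zc y * zc y / l ^+ 2 * M i j) * dl j i)).
  by rewrite sum_dl.
by move=> j _; rewrite ginv_entry (dlC i j); ring.
Qed.

Lemma scal_eq x : zc x != 0 -> scalar_curv g x = - (d%:R + 1) * d%:R / l ^+ 2.
Proof.
move=> hz; rewrite /scalar_curv sum_ginv.
under eq_bigr => i _ do rewrite ricci_eq // dl_refl.
rewrite sum_const_n -[n%:R]natr1; field; rewrite hz hl0 //.
Qed.

Lemma cvg_sumI m (h : 'I_m -> V -> R) (y : V) :
  (forall i, h i w @[w --> y] --> h i y) ->
  \sum_(i < m) h i w @[w --> y] --> \sum_(i < m) h i y.
Proof.
elim: m h => [|k IH] h H.
  rewrite big_ord0.
  have -> : (fun w => \sum_(i < 0) h i w) = (fun=> 0) by apply/funext => w; rewrite big_ord0.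
  exact: (@cvg_cst _ (0:R) _ (nbhs y) (nbhs_filter y)).
have -> : \sum_(i < k.+1) h i y = \sum_(i < k) h (widen_ord (leqnSn k) i) y + h ord_max y.
  by rewrite big_ord_recr.
have -> : (fun w => \sum_(i < k.+1) h i w) =
   (fun w => \sum_(i < k) h (widen_ord (leqnSn k) i) w + h ord_max w).
  by apply/funext => w; rewrite big_ord_recr.
apply: cvgD; last exact: H.
  exact: (nbhs_filter y).
exact: (IH (fun i => h (widen_ord (leqnSn k) i)) (fun i => H _)).
Qed.

Lemma cvg_coord (y : V) k : w ord0 k @[w --> y] --> y ord0 k.
Proof. exact: coord_continuous. Qed.

Lemma cvg_Qv (y : V) : Qv w @[w --> y] --> Qv y.
Proof.
rewrite /Qv; apply: cvgD; first exact: (nbhs_filter y).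
  exact: (@cvg_cst _ Kc _ (nbhs y) (nbhs_filter y)).
apply: cvg_sumI => i.
have -> : (fun w : V => (w ord0 i - sft i) ^+ 2) =
   (fun w => (w ord0 i - sft i) * (w ord0 i - sft i)).
  by apply/funext => w; rewrite expr2.
rewrite expr2; apply: cvgM; try exact: (nbhs_filter y); apply: cvgB;
  try exact: (nbhs_filter y); try exact: cvg_coord;
  exact: (@cvg_cst _ (sft i) _ (nbhs y) (nbhs_filter y)).
Qed.

Lemma S_near (y : V) : 0 < zc y -> 0 < Qv y ->
  \forall w \near y, 0 < zc w /\ 0 < Qv w.
Proof.
move=> hz hQ.
have hz' := @cvgr_gt _ _ _ (nbhs_filter y) (fun w : V => zc w) (zc y) (cvg_coord y ord0) 0 hz.
have hQ' := @cvgr_gt _ _ _ (nbhs_filter y) Qv (Qv y) (cvg_Qv y) 0 hQ.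
by near=> w; split; [near: w; exact: hz' | near: w; exact: hQ'].
Unshelve. all: by end_near.
Qed.


Lemma sft0 : sft ord0 = - a.
Proof. by rewrite /sft unlift_none. Qed.

Lemma keyhess i j x : zc x != 0 ->
  D2U x i j + (zc x)^-1 * (dl i ord0 * DU x j + dl j ord0 * DU x i - dl i j * DU x ord0)
  = (U x - 2 * a) * ((zc x)^-1 * (zc x)^-1) * dl i j.
Proof.
move=> hz; rewrite /D2U /DU /U /=.
have E : x ord0 ord0 = zc x by [].
have [->|hi] := eqVneq i ord0; have [->|hj] := eqVneq j ord0;
  rewrite /dl ?eqxx ?(negbTE hi) ?(negbTE hj) ?(eq_sym ord0) ?(negbTE hi) ?(negbTE hj) /=;
  rewrite ?sft0 ?E ?(eq_sym j i); field; exact: hz.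
Qed.

Lemma sumDU2 x : zc x != 0 ->
  \sum_(i < n) DU x i ^+ 2 = (U x ^+ 2 - 4 * a * U x - 4 * Kc) * ((zc x)^-1 * (zc x)^-1).
Proof.
move=> hz.
set iz := (zc x)^-1.
rewrite (eq_bigr (fun i => 4 * (iz * iz) * (x ord0 i - sft i) ^+ 2
   + ((Qv x) ^+ 2 * (iz * iz * iz * iz) - 4 * Qv x * (iz * iz * iz) * (x ord0 i - sft i))
     * dl i ord0)); last first.
  move=> i _; rewrite /DU -/iz.
  have [->|hi] := eqVneq i ord0; rewrite /dl ?eqxx ?(negbTE hi) /=; ring.
rewrite big_split /= -mulr_sumr sum_dl sft0.
have -> : \sum_(i < n) (x ord0 i - sft i) ^+ 2 = Qv x - Kc by rewrite /Qv; ring.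
rewrite /U -/iz.
have E : x ord0 ord0 = zc x by [].
rewrite E /iz; field; exact: hz.
Qed.


Hypothesis hlp : 0 < l.
Hypothesis hlam : lam != 0.
Hypothesis hb : 0 < b.
Hypothesis hd : (2 <= d)%N.

Notation dd := (d%:R : R).
Definition C0 : R := (dd - 1) / (l * Num.sqrt `|lam|).
Definition Bc : R := C0 * b.
Definition pp : R := (dd - 1) / 2.
Notation phi := (phisol d l lam a b z0).
Notation Fs := (Fsol d l lam a b z0).
Definition Sp (y : V) := 0 < zc y /\ 0 < Qv y.

Lemma dd1_gt0 : 0 < dd - 1.
Proof. by rewrite /dd subr_gt0 ltr1n. Qed.

Lemma sq_gt0 : 0 < Num.sqrt `|lam|.
Proof. by rewrite sqrtr_gt0 normr_gt0. Qed.

Lemma Bc_gt0 : 0 < Bc.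
Proof.
rewrite /Bc /C0 mulr_gt0 // divr_gt0 ?dd1_gt0 // mulr_gt0 //; exact: sq_gt0.
Qed.

Lemma Fs_eq y : Fs y = Bc * (U y)^-1.
Proof.
rewrite /Fsol Qv_eq /U /Bc /C0 invf_div; ring.
Qed.

Lemma U_gt0 y : Sp y -> 0 < U y.
Proof. by case=> h1 h2; rewrite /U divr_gt0. Qed.

Lemma Sp_z y : Sp y -> zc y != 0.
Proof. by case=> h1 _; rewrite gt_eqF. Qed.

Lemma phi_S y : Sp y -> phi y = Bc `^ pp * U y `^ (- pp).
Proof.
move=> hS; have hU := U_gt0 y hS.
rewrite /phisol Fs_eq -/pp powRM ?invr_ge0 ?(ltW hU) ?(ltW Bc_gt0) //.
by rewrite -powR_inv1 ?(ltW hU) // -powRrM mulN1r.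
Qed.

Lemma psi_S y : Sp y -> phi y `^ (- (2 / (dd - 1))) = U y / Bc.
Proof.
move=> hS; have hU := U_gt0 y hS.
rewrite /phisol -powRrM.
have -> : (dd - 1) / 2 * - (2 / (dd - 1)) = -1.
  by field; rewrite gt_eqF // dd1_gt0.
rewrite powR_inv1; last by rewrite Fs_eq mulr_ge0 ?invr_ge0 ?(ltW hU) ?(ltW Bc_gt0).
by rewrite Fs_eq invfM invrK mulrC.
Qed.


Lemma Sp_near y : Sp y -> \forall w \near y, Sp w.
Proof. by case=> h1 h2; exact: S_near. Qed.

Lemma isd_phi y j : Sp y ->
  is_derive y (ee j) phi (Bc `^ pp * (- pp * U y `^ (- pp - 1) * DU y j)).
Proof.
move=> hS.
apply: (@near_eq_is_derive _ _ _ (fun w => Bc `^ pp * U w `^ (- pp))).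
  by near=> w; rewrite phi_S //; near: w; exact: Sp_near.
apply: isd_eq.
  exact: (isdM (isdC (Bc `^ pp) y (ee j)) (isd_powR (- pp) (isdU y j (Sp_z y hS)) (U_gt0 y hS))).
rewrite /=; ring.
Unshelve. all: by end_near.
Qed.

Lemma pd_phi y j : Sp y -> pd phi j y = Bc `^ pp * (- pp * U y `^ (- pp - 1) * DU y j).
Proof. by move=> hS; have [_ h] := isd_phi y j hS; exact: h. Qed.

Lemma isd_pdphi x i j : Sp x ->
  is_derive x (ee i) (pd phi j)
    (Bc `^ pp * (- pp * (U x `^ (- pp - 1) * D2U x i j
      + DU x j * ((- pp - 1) * U x `^ (- pp - 1 - 1) * DU x i)))).
Proof.
move=> hS.
apply: (@near_eq_is_derive _ _ _ (fun w => Bc `^ pp * (- pp * U w `^ (- pp - 1) * DU w j))).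
  by near=> w; rewrite pd_phi //; near: w; exact: Sp_near.
apply: isd_eq.
  exact: (isdM (isdC (Bc `^ pp) x (ee i)) (isdM (isdM (isdC (- pp) x (ee i))
     (isd_powR (- pp - 1) (isdU x i (Sp_z x hS)) (U_gt0 x hS))) (isdDU x i j (Sp_z x hS)))).
rewrite /=; ring.
Unshelve. all: by end_near.
Qed.

Notation psi := (fun y => phi y `^ (- (2 / (dd - 1)))).

Lemma isd_psi y j : Sp y -> is_derive y (ee j) psi (DU y j * Bc^-1).
Proof.
move=> hS.
apply: (@near_eq_is_derive _ _ _ (fun w => U w * Bc^-1)).
  by near=> w; rewrite psi_S //; near: w; exact: Sp_near.
apply: isd_eq.
  exact: (isdM (isdU y j (Sp_z y hS)) (isdC (Bc^-1) y (ee j))).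
rewrite /=; ring.
Unshelve. all: by end_near.
Qed.

Lemma pd_psi y j : Sp y -> pd psi j y = DU y j * Bc^-1.
Proof. by move=> hS; have [_ h] := isd_psi y j hS; exact: h. Qed.

Lemma isd_pdpsi x i j : Sp x -> is_derive x (ee i) (pd psi j) (D2U x i j * Bc^-1).
Proof.
move=> hS.
apply: (@near_eq_is_derive _ _ _ (fun w => DU w j * Bc^-1)).
  by near=> w; rewrite pd_psi //; near: w; exact: Sp_near.
apply: isd_eq.
  exact: (isdM (isdDU x i j (Sp_z x hS)) (isdC (Bc^-1) x (ee i))).
rewrite /=; ring.
Unshelve. all: by end_near.
Qed.


Lemma pdpd_phi x i j : Sp x -> pd (pd phi j) i x =
    Bc `^ pp * (- pp * (U x `^ (- pp - 1) * D2U x i j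
      + DU x j * ((- pp - 1) * U x `^ (- pp - 1 - 1) * DU x i))).
Proof. by move=> hS; have [_ h] := isd_pdphi x i j hS; exact: h. Qed.

Lemma pdpd_psi x i j : Sp x -> pd (pd psi j) i x = D2U x i j * Bc^-1.
Proof. by move=> hS; have [_ h] := isd_pdpsi x i j hS; exact: h. Qed.

Lemma D2U_eq x i j : zc x != 0 -> D2U x i j =
  (U x - 2 * a) * ((zc x)^-1 * (zc x)^-1) * dl i j
  - (zc x)^-1 * (dl i ord0 * DU x j + dl j ord0 * DU x i - dl i j * DU x ord0).
Proof. by move=> hz; rewrite -(keyhess i j x hz); ring. Qed.

Lemma hess_phi x i j : Sp x -> hess g phi i j x =
  Bc `^ pp * (- pp) * (U x `^ (- pp - 1) * ((U x - 2 * a) * ((zc x)^-1 * (zc x)^-1) * dl i j)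
    + (- pp - 1) * U x `^ (- pp - 1 - 1) * (DU x i * DU x j)).
Proof.
move=> hS; have hz := Sp_z x hS.
rewrite /hess pdpd_phi //.
rewrite (eq_bigr (fun k => (- (zc x)^-1 * Bc `^ pp * (- pp * U x `^ (- pp - 1))) * (cc k i j * DU x k)));
  last by move=> k _; rewrite chris_eq pd_phi //; ring.
rewrite -mulr_sumr sum_cc D2U_eq //; ring.
Qed.

Lemma hess_psi x i j : Sp x -> hess g psi i j x =
  Bc^-1 * ((U x - 2 * a) * ((zc x)^-1 * (zc x)^-1) * dl i j).
Proof.
move=> hS; have hz := Sp_z x hS.
rewrite /hess pdpd_psi //.
rewrite (eq_bigr (fun k => (- (zc x)^-1 * Bc^-1) * (cc k i j * DU x k)));
  last by move=> k _; rewrite chris_eq pd_psi //; ring.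
rewrite -mulr_sumr sum_cc D2U_eq //; ring.
Qed.

Lemma box_psi x : Sp x -> box g psi x =
  zc x * zc x / l ^+ 2 * (n%:R * (Bc^-1 * ((U x - 2 * a) * ((zc x)^-1 * (zc x)^-1)))).
Proof.
move=> hS; rewrite /box (sum_ginv (fun i j => hess g psi i j x)).
under eq_bigr => i _ do rewrite hess_psi // dl_refl mulr1.
by rewrite sum_const_n.
Qed.

Lemma box_phi x : Sp x -> box g phi x =
  zc x * zc x / l ^+ 2 * (Bc `^ pp * (- pp) * (U x `^ (- pp - 1) *
    (n%:R * ((U x - 2 * a) * ((zc x)^-1 * (zc x)^-1)))
    + (- pp - 1) * U x `^ (- pp - 1 - 1) *
      ((U x ^+ 2 - 4 * a * U x - 4 * Kc) * ((zc x)^-1 * (zc x)^-1)))).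
Proof.
move=> hS; rewrite /box (sum_ginv (fun i j => hess g phi i j x)).
under eq_bigr => i _ do rewrite hess_phi // dl_refl mulr1.
rewrite -mulr_sumr big_split /= sum_const_n -mulr_sumr.
rewrite (eq_bigr (fun i => DU x i ^+ 2)); last by move=> i _; rewrite expr2.
by rewrite sumDU2 ?(Sp_z x hS) //; congr (_ * (_ * _)); ring.
Qed.


Lemma stress0 x kappa mu nu : Sp x -> stressT d kappa g phi mu nu x = 0.
Proof.
move=> hS; have hz := Sp_z x hS.
rewrite /stressT /=.
have -> : hess g psi mu nu x - (dd + 1)^-1 * g x mu nu * box g psi x = 0.
  rewrite hess_psi // box_psi // g_entry -[n%:R]natr1.
  field; rewrite hz hl0 gt_eqF ?Bc_gt0 //.
  by rewrite natr1 pnatr_eq0.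
exact: mulr0.
Qed.


Lemma box_eq x : Sp x -> box g phi x - (dd - 1) / (4 * dd) * scalar_curv g x * phi x
  - (dd + 1) / (dd - 1) * lam * phi x `^ ((dd + 3) / (dd - 1)) = 0.
Proof.
move=> hS; have hz := Sp_z x hS; have hU := U_gt0 x hS.
have hd1 : dd - 1 != 0 by rewrite gt_eqF // dd1_gt0.
have hF : 0 < Fs x by rewrite Fs_eq mulr_gt0 ?invr_gt0 ?Bc_gt0.
have imp : forall (c : bool) (y : R), 0 < y -> c ==> (y != 0).
  by move=> c y0 hy; apply/implyP => _; rewrite gt_eqF.
have hpow : phi x `^ ((dd + 3) / (dd - 1)) = phi x * (Bc * (U x)^-1) ^+ 2.
  rewrite /phisol -powRrM.
  have -> : (dd - 1) / 2 * ((dd + 3) / (dd - 1)) = (dd - 1) / 2 + 2%:R.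
    by field.
  rewrite powRD; last exact: imp.
  by rewrite powR_mulrn ?(ltW hF) // Fs_eq.
have e1 : U x `^ (- pp - 1) = U x `^ (- pp) * (U x)^-1.
  by rewrite powRD ?powR_inv1 ?(ltW hU) // imp.
have e2 : U x `^ (- pp - 1 - 1) = U x `^ (- pp) * (U x)^-1 * (U x)^-1.
  by rewrite powRD ?e1 ?powR_inv1 ?(ltW hU) // imp.
rewrite hpow box_phi // scal_eq // phi_S // e2 e1.
rewrite /Bc /C0 /Kc /pp.
set q := Num.sqrt `|lam|.
set s := Num.sg lam.
have hq : q != 0 by rewrite gt_eqF // sq_gt0.
have hlam' : lam = s * q ^+ 2 by rewrite /q sqr_sqrtr ?normr_ge0 // -numEsg.
clearbody q s.
rewrite {1}hlam'.
set P := U x `^ (- ((d%:R - 1) / 2)).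
set Z := (((d%:R - 1) / (l * q) * b) `^ ((d%:R - 1) / 2)).
rewrite -[n%:R]natr1.
field.
have hd0 : d%:R != 0 :> R by rewrite pnatr_eq0 -lt0n ltnW.
by rewrite gt_eqF // hq hl0 hd1 hd0 hz.
Qed.


Definition Qz (zv : 'rV[R]_d) (t : R) : R := Kc + (t + a) ^+ 2 + dist2 zv z0.
Definition Gf zv (t : R) : R := (C0 * b / Qz zv t) `^ pp.

Lemma zc_pt (t : R) (zv : 'rV[R]_d) : zc (pt t zv) = t.
Proof. by rewrite /zc /pt mxE unlift_none. Qed.

Lemma zvec_pt (t : R) (zv : 'rV[R]_d) : zvec (pt t zv) = zv.
Proof. by apply/rowP => i; rewrite /zvec /pt !mxE liftK. Qed.

Lemma C0_gt0 : 0 < C0.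
Proof. rewrite /C0 divr_gt0 ?dd1_gt0 // mulr_gt0 //; exact: sq_gt0. Qed.

Lemma phi_pt (zv : 'rV[R]_d) (t : R) : 0 < t -> 0 < Qz zv t -> phi (pt t zv) = t `^ pp * Gf zv t.
Proof.
move=> ht hQ.
rewrite /phisol /Fsol zc_pt zvec_pt -/Kc -/(Qz zv t) -/C0 -/pp /Gf.
rewrite -powRM ?(ltW ht) //; last by rewrite divr_ge0 ?(ltW hQ) // mulr_ge0 ?(ltW C0_gt0) ?(ltW hb).
have -> : C0 * (b * t / Qz zv t) = t * (C0 * b / Qz zv t) by rewrite /= ; ring.
by [].
Qed.

Lemma isdQz zv (t : R) : is_derive t 1 (Qz zv) (2 * (t + a)).
Proof.
apply: (@isd_ext _ _ (fun t => Kc + (t + a) * (t + a) + dist2 zv z0)).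
  by move=> u; rewrite /Qz expr2.
apply: isd_eq.
change ((0 + 1) * ((t + a) * (1 + 0) + (t + a) * (1 + 0)) + 0 = 2 * (t + a)); ring.
Qed.

Lemma isdG zv : 0 < Qz zv 0 ->
  is_derive (0:R) 1 (Gf zv)
    (pp * (C0 * b / Qz zv 0) `^ (pp - 1) * (C0 * b * (- (Qz zv 0) ^- 2 * (2 * a)))).
Proof.
move=> hQ.
have h1 : is_derive (0:R) 1 (Qz zv) (2 * a).
  apply: (@isd_ext _ _ (fun t => Kc + (t + a) * (t + a) + dist2 zv z0)).
    by move=> t; rewrite /Qz expr2.
  apply: isd_eq.
  change ((0 + 1) * ((0 + a) * (1 + 0) + (0 + a) * (1 + 0)) + 0 = 2 * a); ring.
have hQ0 : Qz zv 0 != 0 by rewrite gt_eqF.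
have h2 := isdM (isdC (C0 * b) (0:R) 1) (isdV h1 hQ0).
have h3 := isd_powR pp h2.
apply: isd_eq; first apply: h3.
  by rewrite /= mulr_gt0 ?invr_gt0 // mulr_gt0 ?C0_gt0.
by rewrite /=; ring.
Qed.


Lemma zexp_cvg0 : expR (- r / l) @[r --> +oo] --> (0:R).
Proof.
have -> : (fun r : R => expR (- r / l)) = (fun x => expR (- x)) \o (fun r => l^-1 * r).
  by apply/funext => r /=; rewrite mulNr mulrC.
apply: cvg_comp; last exact: cvgr_expR.
apply: gt0_cvgMry; first by rewrite invr_gt0.
exact: cvg_id.
Qed.

Lemma zexp_cvg : expR (- r / l) @[r --> +oo] --> (0:R)^'.
Proof.
move=> A /= hA.
have := @zexp_cvg0 (fun x => x != 0 -> A x) hA.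
change ((\forall r \near +oo, (expR (- r / l) != 0 -> A (expR (- r / l)))) ->
   \forall r \near +oo, A (expR (- r / l))).
apply: filterS => r H; apply: H.
by rewrite gt_eqF // expR_gt0.
Qed.


Definition dGv zv : R :=
  pp * (C0 * b / Qz zv 0) `^ (pp - 1) * (C0 * b * (- (Qz zv 0) ^- 2 * (2 * a))).

Lemma expansion_G zv : 0 < Qz zv 0 -> expansion d l phi zv (Gf zv 0) (dGv zv).
Proof.
move=> hQ.
have [hder hval] := isdG zv hQ.
have hq : (fun h : R => h^-1 *: ((Gf zv \o shift 0) (h *: 1) - Gf zv 0)) @ 0^' --> dGv zv.
  by rewrite /dGv -hval; exact: hder.
have hcomp := cvg_comp _ _ zexp_cvg hq.
have hlim : (fun r => (fun h : R => h^-1 *: ((Gf zv \o shift 0) (h *: 1) - Gf zv 0))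
   (expR (- r / l)) - dGv zv) @ +oo --> dGv zv - dGv zv.
  apply: cvgB; first [typeclasses eauto | exact: hcomp | exact: cvg_cst]; first [typeclasses eauto | exact: hcomp | exact: cvg_cst].
rewrite subrr in hlim.
have hQc : Qz zv (expR (- r / l)) @[r --> +oo] --> Qz zv 0.
  apply: cvg_comp; first exact: zexp_cvg0.
  have [hd1 _] := isdQz zv 0.
  exact/differentiable_continuous/derivable1_diffP.
have hpos := @cvgr_gt _ _ (@pinfty_nbhs R) ltac:(typeclasses eauto) (fun r => Qz zv (expR (- r / l))) _ hQc 0 hQ.
rewrite /expansion.
apply: (cvg_trans _ hlim).
apply: near_eq_cvg; near=> r.
have hQr : 0 < Qz zv (expR (- r / l)) by near: r; exact: hpos.
have hz : 0 < expR (- r / l) by rewrite expR_gt0.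
rewrite phi_pt //.
have -> : - ((d%:R - 1) * r / (2 * l)) = (- r / l) * pp by rewrite /pp; field.
have -> : - ((d%:R + 1) * r / (2 * l)) = (- r / l) * pp + (- r / l) by rewrite /pp; field.
rewrite expRD (expRM (- r / l) pp).
set z := expR (- r / l).
have hzp : 0 < z `^ pp by rewrite powR_gt0.
change (z^-1 * (Gf zv (z * 1 + 0) - Gf zv 0) - dGv zv =
  (z `^ pp * Gf zv z - z `^ pp * Gf zv 0 - dGv zv * (z `^ pp * z)) / (z `^ pp * z)).
rewrite mulr1 addr0.
change (z^-1 * (Gf zv z - Gf zv 0) - dGv zv =
  (z `^ pp * Gf zv z - z `^ pp * Gf zv 0 - dGv zv * (z `^ pp * z)) / (z `^ pp * z)).
by field; rewrite !gt_eqF.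
Unshelve. all: by end_near.
Qed.


Lemma phim_eq zv : phiminus d l lam a b z0 zv = Gf zv 0.
Proof. by rewrite /phiminus /Gf /Qz /C0 /pp /Kc add0r mulrA. Qed.

Lemma X_gt0 zv : 0 < Qz zv 0 -> 0 < C0 * b / Qz zv 0.
Proof. by move=> hQ; rewrite divr_gt0 // mulr_gt0 // C0_gt0. Qed.

Lemma dGv_eq zv : 0 < Qz zv 0 ->
  dGv zv = - l * alphac lam a b * Gf zv 0 `^ ((dd + 1) / (dd - 1)).
Proof.
move=> hQ; have hX := X_gt0 zv hQ.
have hd1 : dd - 1 != 0 by rewrite gt_eqF // dd1_gt0.
have imp : forall (c : bool) (y : R), 0 < y -> c ==> (y != 0).
  by move=> c y0 hy; apply/implyP => _; rewrite gt_eqF.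
rewrite /Gf -powRrM.
have -> : pp * ((dd + 1) / (dd - 1)) = pp + 1 by rewrite /pp; field.
rewrite powRD ?imp // powRr1 ?(ltW hX) //.
rewrite /dGv.
rewrite powRD ?imp // powR_inv1 ?(ltW hX) //.
set P := (C0 * b / Qz zv 0) `^ pp.
rewrite /alphac /C0 /pp.
have hq : Num.sqrt `|lam| != 0 by rewrite gt_eqF // sq_gt0.
have hQ0 : Qz zv 0 != 0 by rewrite gt_eqF.
field.
by rewrite hq hQ0 hl0 gt_eqF.
Qed.

Lemma fpot_der (al m : R) : 0 < m ->
  derive1 (fpot d al) m = - al * m `^ ((dd + 1) / (dd - 1)).
Proof.
move=> hm.
have hd1 : dd - 1 != 0 by rewrite gt_eqF // dd1_gt0.
have hd0 : dd != 0 by rewrite pnatr_eq0 -lt0n ltnW.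
have h := isdM (isdC (- al * ((dd - 1) / (2 * dd))) m 1) (@is_derive1_powR R (2 * dd / (dd - 1)) m hm).
rewrite derive1E /fpot.
have [_ ->] := h.
have -> : 2 * dd / (dd - 1) - 1 = (dd + 1) / (dd - 1) by field.
rewrite /=; field.
by rewrite hd1 hd0.
Qed.


Lemma main_local (kappa : R) :
  let g := @hypmetric R d l in
  let phi := phisol d l lam a b z0 in
  let alpha := alphac lam a b in
  (forall x : 'rV[R]_d.+1,
     0 < zc x -> 0 < Fsol d l lam a b z0 x ->
     (forall mu nu, stressT d kappa g phi mu nu x = 0) /\
     (forall mu nu, ricci g mu nu x + d%:R / l ^+ 2 * g x mu nu = 0) /\
     box g phi x - (d%:R - 1) / (4 * d%:R) * scalar_curv g x * phi x
       - (d%:R + 1) / (d%:R - 1) * lam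
         * phi x `^ ((d%:R + 3) / (d%:R - 1)) = 0) /\
  (forall zv : 'rV[R]_d,
     0 < - Num.sg lam * b ^+ 2 + a ^+ 2 + dist2 zv z0 ->
     let phim := phiminus d l lam a b z0 zv in
     expansion d l phi zv phim
       (- l * alpha * phim `^ ((d%:R + 1) / (d%:R - 1))) /\
     (forall phiplus : R, expansion d l phi zv phim phiplus ->
        let hatpi := - l^-1 * phiplus in
        hatpi = alpha * phim `^ ((d%:R + 1) / (d%:R - 1)) /\
        - hatpi - derive1 (fpot d alpha) phim = 0)).
Proof.
move=> g0 phi0 alpha; rewrite /g0 /phi0 /alpha {g0 phi0 alpha}.
split.
  move=> x hz hF.
  have hS : Sp x.
    split => //.
    move: hF; rewrite Fs_eq pmulr_rgt0 ?Bc_gt0 // invr_gt0 /U => hU.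
    by have := mulr_gt0 hU hz; rewrite mulfVK // gt_eqF.
  split; first by move=> mu nu; exact: stress0.
  split; last exact: box_eq.
  move=> mu nu; rewrite ricci_eq ?(Sp_z x hS) // g_entry.
  by field; rewrite hl0 (Sp_z x hS).
move=> zv hD.
set phim := phiminus d l lam a b z0 zv.
have hQ : 0 < Qz zv 0 by rewrite /Qz add0r.
have hphim : phim = Gf zv 0 by rewrite /phim phim_eq.
have hm : 0 < phim by rewrite hphim /Gf powR_gt0 // X_gt0.
have hexp : expansion d l phi zv phim (- l * alphac lam a b * phim `^ ((d%:R + 1) / (d%:R - 1))).
  by rewrite hphim -dGv_eq //; exact: expansion_G.
split; first exact: hexp.
move=> phiplus hpp.
set hatpi := - l^-1 * phiplus.
have Eq : phiplus = - l * alphac lam a b * phim `^ ((d%:R + 1) / (d%:R - 1)).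
  set c := - l * _ * _ in hexp *.
  have H := cvgB hpp hexp.
  rewrite subrr in H.
  have {}H := H ltac:(typeclasses eauto).
  have Hc : (fun r : R => c - phiplus) @ +oo --> (0:R).
    apply: (cvg_trans _ H); apply: near_eq_cvg; near=> r => /=.
    have fsub : forall (f1 g1 : R -> R) t, (f1 - g1) t = f1 t - g1 t by [].
    rewrite fsub /=.
    set e := expR (- ((d%:R + 1) * r / (2 * l))).
    have he : e != 0 by rewrite gt_eqF // expR_gt0.
    by field.
  have := @cvg_lim R (@norm_hausdorff R R^o) _ (@pinfty_nbhs R) ltac:(typeclasses eauto) _ _ Hc.
  rewrite (@lim_cst R (@norm_hausdorff R R^o) _ (@pinfty_nbhs R) ltac:(typeclasses eauto)).
  by move/eqP; rewrite subr_eq0 => /eqP ->.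
have Ehat : hatpi = alphac lam a b * phim `^ ((d%:R + 1) / (d%:R - 1)).
  by rewrite /hatpi Eq; field.
split => //.
by rewrite fpot_der // Ehat mulNr subrr.
Unshelve. all: by end_near.
Qed.

End Model.



Theorem mainTheorem12 (R : realType) (d : nat) (l lambda a b kappa : R)
  (z0 : 'rV[R]_d) :
  (2 <= d)%N -> 0 < l -> lambda != 0 -> 0 < b ->
  let g := @hypmetric R d l in
  let phi := phisol d l lambda a b z0 in
  let alpha := alphac lambda a b in
  (* field equations on the set where the right-hand side is positive *)
  (forall x : 'rV[R]_d.+1,
     0 < zc x -> 0 < Fsol d l lambda a b z0 x ->
     (forall mu nu, stressT d kappa g phi mu nu x = 0) /\
     (forall mu nu, ricci g mu nu x + d%:R / l ^+ 2 * g x mu nu = 0) /\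
     box g phi x - (d%:R - 1) / (4 * d%:R) * scalar_curv g x * phi x
       - (d%:R + 1) / (d%:R - 1) * lambda
         * phi x `^ ((d%:R + 3) / (d%:R - 1)) = 0) /\
  (* asymptotic expansion and mixed boundary condition *)
  (forall zv : 'rV[R]_d,
     0 < - Num.sg lambda * b ^+ 2 + a ^+ 2 + dist2 zv z0 ->
     let phim := phiminus d l lambda a b z0 zv in
     expansion d l phi zv phim
       (- l * alpha * phim `^ ((d%:R + 1) / (d%:R - 1))) /\
     (forall phiplus : R, expansion d l phi zv phim phiplus ->
        let hatpi := - l^-1 * phiplus in
        hatpi = alpha * phim `^ ((d%:R + 1) / (d%:R - 1)) /\
        - hatpi - derive1 (fpot d alpha) phim = 0)).
Proof.
move=> hd hl hlam hb.
have hl0 : l != 0 by rewrite gt_eqF.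
exact: (@main_local R d l lambda a b z0 hl0 hl hlam hb hd kappa).
Qed.
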